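(* Let $\mathcal N_3$ be a simple 3-level network and let $\mathcal N_2$ be the simple 2-level network associated to it. Let $\mathcal U_3$ and $\mathcal U_2$ be the sets of edges incident with the sources of $\mathcal N_3$ and $\mathcal N_2$, respectively, and let $\mathbf A_{\mathcal N_3},\mathbf A_{\mathcal N_2}$ be adversaries able to corrupt up to $t$ edges of $\mathcal U_3$ and of $\mathcal U_2$, respectively. Then for every alphabet $\mathcal A$ and every positive integer $i$, \[C_i(\mathcal N_3,\mathcal A,\mathbf A_{\mathcal N_3})\le C_i(\mathcal N_2,\mathcal A,\mathbf A_{\mathcal N_2}).\]
   Context: An alphabet is a finite set $\mathcal A$ with $|\mathcal A|\ge2$. A simple 3-level network is a directed acyclic multigraph with a source $S$, a single terminal $T$, and intermediate nodes partitioned into $L_1,L_2$, such that every edge goes from $S$ to $L_1$, from $L_1$ to $L_2$, or from $L_2$ to $T$ (so every $S$–$T$ path has length 3), and every intermediate node lies on some $S$–$T$ path. Let $G^{3,2}$ be the (undirected) graph on $L_1\cup L_2$ whose edges are the edges of $\mathcal N_3$ between $L_1$ and $L_2$, with connected components $K_1,\dots,K_n$. The associated simple 2-level network $\mathcal N_2$ has source $S$, intermediate nodes $V_1,\dots,V_n$ (one per component), terminal $T$, $a_j$ parallel edges $S\to V_j$ and $b_j$ parallel edges $V_j\to T$, where $a_j$ (resp. $b_j$) is the number of edges of $\mathcal N_3$ from $S$ into $K_j$ (resp. from $K_j$ to $T$). In a network each edge carries one symbol of $\mathcal A$; a network code assigns to each intermediate node $V$ a function $\mathcal A^{\deg^-(V)}\to\mathcal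 A^{\deg^+(V)}$ mapping the symbols on its incoming edges to those on its outgoing edges. In one use, the source sends $x\in\mathcal A^{\deg^+(S)}$, the adversary may replace symbols on up to $t$ edges of the given vulnerable set by arbitrary symbols, and values propagate via the network code; the fan-out set $\Omega(x)$ is the set of all vectors the terminal can receive. For $i$ uses with the same network code, the fan-out set of $(x^1,\dots,x^i)$ is $\Omega(x^1)\times\dots\times\Omega(x^i)$. A nonempty code $C\subseteq(\mathcal A^{\deg^+(S)})^i$ is unambiguous if distinct codewords have disjoint fan-out sets, and $C_i$ is the maximum of $\log_{|\mathcal A|}(|C|)/i$ over network codes and unambiguous codes. *)

(* Defs.v *)
From Stdlib Require Import Reals.
From mathcomp Require Import all_boot.

Set Implicit Arguments.
Unset Strict Implicit.
Unset Printing Implicit Defensive.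

(* Simple 3-level networks.  Nodes of L1, L2 and edges are finite types;
   E1 : edges S -> L1,  E2 : edges L1 -> L2,  E3 : edges L2 -> T.       *)
Record net3 := Net3 {
  L1 : finType; L2 : finType;
  E1 : finType; E2 : finType; E3 : finType;
  h1 : E1 -> L1;
  t2 : E2 -> L1; h2 : E2 -> L2;
  t3 : E3 -> L2
}.

(* every intermediate node lies on some S--T path *)
Definition simple3 (N : net3) : Prop :=
  (forall v : L1 N, exists e1 e2 e3,
      h1 e1 = v /\ t2 e2 = v /\ t3 e3 = h2 e2) /\
  (forall w : L2 N, exists e1 e2 e3,
      h2 e2 = w /\ t3 e3 = w /\ h1 e1 = t2 e2).

(* Simple 2-level networks: intermediate nodes V, source edges E1 and
   terminal edges E3. *)
Record net2 := Net2 {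
  V2 : finType; F1 : finType; F3 : finType;
  g1 : F1 -> V2; g3 : F3 -> V2
}.

(* Adversary: corrupts at most t of the source edges. *)
Definition ball (E A : finType) (t : nat) (x : {ffun E -> A}) : {set {ffun E -> A}} :=
  [set y : {ffun E -> A} | #|[set e | y e != x e]| <= t].

Section Net3Codes.
Variables (N : net3) (A : finType).

Definition In1 (v : L1 N) := {e : E1 N | h1 e == v}.
Definition Out1 (v : L1 N) := {e : E2 N | t2 e == v}.
Definition In2 (w : L2 N) := {e : E2 N | h2 e == w}.
Definition Out2 (w : L2 N) := {e : E3 N | t3 e == w}.

Definition code3 : finType :=
  ({dffun forall v : L1 N, {ffun {ffun In1 v -> A} -> {ffun Out1 v -> A}}} *
   {dffun forall w : L2 N, {ffun {ffun In2 w -> A} -> {ffun Out2 w -> A}}})%type.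

Definition run3 (F : code3) (y : {ffun E1 N -> A}) : {ffun E3 N -> A} :=
  let z2 : {ffun E2 N -> A} :=
    [ffun e2 => F.1 (t2 e2) [ffun e : In1 (t2 e2) => y (val e)]
                    (exist _ e2 (eqxx (t2 e2)))] in
  [ffun e3 => F.2 (t3 e3) [ffun e : In2 (t3 e3) => z2 (val e)]
                  (exist _ e3 (eqxx (t3 e3)))].

Definition fanout3 (t : nat) (F : code3) (x : {ffun E1 N -> A}) : {set {ffun E3 N -> A}} :=
  [set run3 F y | y in ball t x].

Definition fanout3_i (t i : nat) (F : code3) (c : {ffun 'I_i -> {ffun E1 N -> A}})
  : {set {ffun 'I_i -> {ffun E3 N -> A}}} :=
  [set z : {ffun 'I_i -> {ffun E3 N -> A}} | [forall k, z k \in fanout3 t F (c k)]].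

Definition unamb3 (t i : nat) (F : code3) (C : {set {ffun 'I_i -> {ffun E1 N -> A}}}) : bool :=
  [forall c in C, forall c' in C,
     (c != c') ==> [disjoint fanout3_i t F c & fanout3_i t F c']].
End Net3Codes.

Section Net2Codes.
Variables (N : net2) (A : finType).

Definition In (v : V2 N) := {e : F1 N | g1 e == v}.
Definition Out (v : V2 N) := {e : F3 N | g3 e == v}.

Definition code2 : finType :=
  {dffun forall v : V2 N, {ffun {ffun In v -> A} -> {ffun Out v -> A}}}.

Definition run2 (F : code2) (y : {ffun F1 N -> A}) : {ffun F3 N -> A} :=
  [ffun e3 => F (g3 e3) [ffun e : In (g3 e3) => y (val e)]
                (exist _ e3 (eqxx (g3 e3)))].

Definition fanout2 (t : nat) (F : code2) (x : {ffun F1 N -> A}) : {set {ffun F3 N -> A}} :=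
  [set run2 F y | y in ball t x].

Definition fanout2_i (t i : nat) (F : code2) (c : {ffun 'I_i -> {ffun F1 N -> A}})
  : {set {ffun 'I_i -> {ffun F3 N -> A}}} :=
  [set z : {ffun 'I_i -> {ffun F3 N -> A}} | [forall k, z k \in fanout2 t F (c k)]].

Definition unamb2 (t i : nat) (F : code2) (C : {set {ffun 'I_i -> {ffun F1 N -> A}}}) : bool :=
  [forall c in C, forall c' in C,
     (c != c') ==> [disjoint fanout2_i t F c & fanout2_i t F c']].
End Net2Codes.

(* C_i = max over network codes F and nonempty unambiguous codes C of
   log_|A| |C| / i.  All candidate values are >= 0 and at least one
   candidate exists (a singleton code), so taking the iterated Rmax with
   default 0 gives exactly this maximum. *)
Local Open Scope R_scope.

Definition rate (A : finType) (i m : nat) : R :=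
  ln (INR m) / (INR i * ln (INR #|A|)).

Definition Cap3 (N : net3) (A : finType) (t i : nat) : R :=
  \big[Rmax/0]_(F : code3 N A)
    \big[Rmax/0]_(C : {set {ffun 'I_i -> {ffun E1 N -> A}}} |
                    (C != set0) && unamb3 t F C)
       rate A i #|C|.

Definition Cap2 (N : net2) (A : finType) (t i : nat) : R :=
  \big[Rmax/0]_(F : code2 N A)
    \big[Rmax/0]_(C : {set {ffun 'I_i -> {ffun F1 N -> A}}} |
                    (C != set0) && unamb2 t F C)
       rate A i #|C|.

Local Close Scope R_scope.

Section Assoc.
Variable N : net3.

Definition LNode : finType := (L1 N + L2 N)%type.

Definition G32 : rel LNode := fun a b =>
  [exists e : E2 N,
     ((a == inl (t2 e)) && (b == inr (h2 e))) ||
     ((b == inl (t2 e)) && (a == inr (h2 e)))].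

Definition compset (x : LNode) : {set LNode} := [set y | connect G32 x y].

Definition Comp := {K : {set LNode} | [exists x, K == compset x]}.

Lemma compset_is_comp (x : LNode) : [exists x', compset x == compset x'].
Proof. by apply/existsP; exists x. Qed.

Definition comp_of (x : LNode) : Comp := exist _ (compset x) (compset_is_comp x).

(* N2: one intermediate node per component; the a_j source edges into
   V_j are the source edges of N3 entering K_j, and the b_j terminal
   edges out of V_j are the edges of N3 from K_j to T. *)
Definition assoc2 : net2 :=
  @Net2 Comp (E1 N) (E3 N)
        (fun e => comp_of (inl (h1 e))) (fun e => comp_of (inr (t3 e))).
End Assoc.

(* Main.v *)
Require Import Defs.
From Stdlib Require Import Reals.
From mathcomp Require Import all_boot.

Set Implicit Arguments.
Unset Strict Implicit.
Unset Printing Implicit Defensive.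
Local Open Scope nat_scope.

Section Sim.
Variables (N : net3) (A : finType) (a0 : A) (F : code3 N A).

Definition ext (K : V2 (assoc2 N)) (inp : {ffun @Defs.In (assoc2 N) K -> A}) : {ffun Defs.E1 N -> A} :=
  [ffun e1 => match (insub e1 : option (@Defs.In (assoc2 N) K)) with Some e => inp e | None => a0 end].

Definition F2 : code2 (assoc2 N) A :=
  finfun (fun K : V2 (assoc2 N) =>
    [ffun inp : {ffun @Defs.In (assoc2 N) K -> A} =>
       [ffun o : @Defs.Out (assoc2 N) K => run3 F (ext inp) (val o)]]).

Lemma G32_sym : symmetric (G32 (N:=N)).
Proof.
move=> a b; apply/existsP/existsP => -[e He]; exists e; by rewrite orbC.
Qed.

Lemma comp_edge (e2 : Defs.E2 N) : comp_of (inl (t2 e2)) = comp_of (N:=N) (inr (h2 e2)).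
Proof.
apply: val_inj => /=; apply/setP => z; rewrite !inE.
apply: same_connect; first exact: (sym_connect_sym G32_sym).
apply: connect1; apply/existsP; exists e2; by rewrite !eqxx.
Qed.

Lemma run3_local (y y' : {ffun Defs.E1 N -> A}) (e3 : Defs.E3 N) :
  (forall e1, comp_of (inl (h1 e1)) = comp_of (N:=N) (inr (t3 e3)) -> y e1 = y' e1) ->
  run3 F y e3 = run3 F y' e3.
Proof.
move=> H; rewrite /run3 !ffunE.
congr (fun_of_fin (fun_of_fin (F.2 (t3 e3)) _) _).
apply/ffunP => -[e2 He2]; rewrite !ffunE /=.
congr (fun_of_fin (fun_of_fin (F.1 (t2 e2)) _) _).
apply/ffunP => -[e1 He1]; rewrite !ffunE /=; apply: H.
by rewrite (eqP He1) comp_edge (eqP He2).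
Qed.

Lemma run_eq (y : {ffun Defs.E1 N -> A}) : run2 F2 y = run3 F y.
Proof.
apply/ffunP => e3; rewrite /run2 ffunE /F2 3!ffunE.
apply: (run3_local (e3 := e3)) => e1 He1; rewrite ffunE.
case: insubP => [u Hu Hv|]; first by rewrite ffunE Hv.
by rewrite /= He1 eqxx.
Qed.

Lemma fanout_eq t (x : {ffun Defs.E1 N -> A}) : fanout2 t F2 x = fanout3 t F x.
Proof.
apply/setP => z; rewrite /fanout2 /fanout3.
apply/imsetP/imsetP => -[y Hy ->]; exists y => //; by rewrite run_eq.
Qed.

Lemma unamb_eq t i (C : {set {ffun 'I_i -> {ffun Defs.E1 N -> A}}}) : unamb2 t F2 C = unamb3 t F C.
Proof.
rewrite /unamb2 /unamb3 /fanout2_i /fanout3_i.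
apply: eq_forallb => c; congr (_ ==> _); apply: eq_forallb => c'.
congr (_ ==> (_ ==> _)).
have E : forall c0, [set z : {ffun 'I_i -> {ffun F3 (assoc2 N) -> A}} | [forall k, z k \in fanout2 t F2 (c0 k)]] =
                    [set z : {ffun 'I_i -> {ffun F3 (assoc2 N) -> A}} | [forall k, z k \in fanout3 t F (c0 k)]].
  by move=> c0; apply: eq_finset => z; apply: eq_forallb => k; rewrite fanout_eq.
by rewrite !E.
Qed.
End Sim.

Open Scope R_scope.

Lemma le_bigmax (I : eqType) (r : seq I) (P : pred I) (G : I -> R) j :
  j \in r -> P j -> G j <= \big[Rmax/0]_(k <- r | P k) G k.
Proof.
elim: r => //= a r IH; rewrite inE big_cons => /orP [/eqP -> ->|Hj Pj].
  apply: Rmax_l.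
case: (P a); last exact: IH.
apply: Rle_trans (IH Hj Pj) _; apply: Rmax_r.
Qed.

Lemma bigmax_le (I : Type) (r : seq I) (P : pred I) (G : I -> R) b :
  0 <= b -> (forall k, P k -> G k <= b) -> \big[Rmax/0]_(k <- r | P k) G k <= b.
Proof.
move=> H0 H; elim: r => [|a r IH]; first by rewrite big_nil.
rewrite big_cons; case Pa: (P a) => //; apply: Rmax_lub => //; exact: H.
Qed.

Lemma bigmax_ge0 (I : Type) (r : seq I) (P : pred I) (G : I -> R) :
  0 <= \big[Rmax/0]_(k <- r | P k) G k.
Proof.
elim: r => [|a r IH]; first by rewrite big_nil; apply: Rle_refl.
rewrite big_cons; case: (P a) => //; apply: Rle_trans IH _; apply: Rmax_r.
Qed.

Close Scope R_scope.

Theorem mainTheorem5 (N : net3) (HN : simple3 N) (A : finType) (HA : 1 < #|A|)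
  (t i : nat) (Hi : 0 < i) :
  Rle (Cap3 N A t i) (Cap2 (assoc2 N) A t i).
Proof.
have [a0 _] : exists a0 : A, true.
  case: (pickP A) => [a _|H]; first by exists a.
  by move: HA; rewrite eq_card0.
rewrite /Cap3; apply: bigmax_le; first exact: bigmax_ge0.
move=> F _.
rewrite /Cap2.
rewrite (eq_bigl (fun C => (C != set0) && unamb2 t (F2 a0 F) C)); last first.
  by move=> C; rewrite unamb_eq.
have H := @le_bigmax _ (index_enum (code2 (assoc2 N) A)) xpredT
   (fun F' => \big[Rmax/R0]_(C | (C != set0) && unamb2 t F' C) rate A i #|C|) (F2 a0 F)
   (mem_index_enum _) isT.
exact: H.
Qed.
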